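(* Consider a classical broadcast channel with finite input alphabet $\mathcal{X}$, finite output alphabets $\mathcal{Y},\mathcal{Z}$ and transition probabilities $p(y,z\mid x)$. Let $(U,V)$ be random variables with joint distribution $p_{UV}$ on finite sets $\mathcal{U}\times\mathcal{V}$, let $f:\mathcal{U}\times\mathcal{V}\to\mathcal{X}$, and let $(Y,Z)$ be random variables with $\Pr\{(Y,Z)=(y,z)\mid U=u,V=v\}=p(y,z\mid f(u,v))$. Let $\varepsilon_0\in[0,1)$, $\varepsilon_\infty\in[0,\tfrac14]$, $\tilde\varepsilon\in(0,1)$ and $\varepsilon>0$ satisfy $37\tilde\varepsilon+8\varepsilon_0\le\varepsilon$, and let $R_1,R_2\ge0$ (with $2^{R_1},2^{R_2}$ integers) satisfy $$R_1\le I_0^{\varepsilon_0}[U;Y]-5\log\tfrac1{\tilde\varepsilon}-2,\qquad R_2\le I_0^{\varepsilon_0}[V;Z]-5\log\tfrac1{\tilde\varepsilon}-2,$$ $$R_1+R_2\le I_0^{\varepsilon_0}[U;Y]+I_0^{\varepsilon_0}[V;Z]-I_\infty^{\varepsilon_\infty}[U;V]-11\log\tfrac1{\tilde\varepsilon}-5.$$ Then there is a one-shot $(R_1,R_2,\varepsilon)$-code for this classical broadcast channel.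
   Context: All logarithms are base 2; $[N]=\{1,\dots,N\}$. For random variables $(U,V)\sim p_{UV}$ on finite $\mathcal{U}\times\mathcal{V}$ with marginals $p_U,p_V$ and $\varepsilon\in[0,1)$: the smooth classical min Rényi divergence is $I_0^{\varepsilon}[U;V]=\sup_{\mathcal{A}\subseteq\mathcal{U}\times\mathcal{V},\ p_{UV}(\mathcal{A})\ge1-\varepsilon}\ -\log\sum_{(u,v)\in\mathcal{A}}p_U(u)p_V(v)$, and the smooth max Rényi divergence is $I_\infty^{\varepsilon}[U;V]=\inf_{\mathcal{G}\subseteq\mathcal{U}\times\mathcal{V},\ p_{UV}(\mathcal{G})>1-\varepsilon}\ \sup_{(u,v)\in\mathcal{G}}\log\frac{p_{UV}(u,v)}{p_U(u)p_V(v)}$ (the same definitions apply to pairs $(U,Y)$, $(V,Z)$). An $(R_1,R_2,\varepsilon)$-code for the classical broadcast channel $p_{YZ\mid X}$ consists of an encoding function $F:[2^{R_1}]\times[2^{R_2}]\to\mathcal{X}$ and decoding functions $D_1:\mathcal{Y}\to[2^{R_1}]$, $D_2:\mathcal{Z}\to[2^{R_2}]$ such that $\Pr\{(M_1,M_2)\ne(D_1(Y'),D_2(Z'))\}\le\varepsilon$, where $(M_1,M_2)$ is uniform on $[2^{R_1}]\times[2^{R_2}]$ and $\Pr\{(Y',Z')=(y,z)\mid M_1=m_1,M_2=m_2\}=p(y,z\mid F(m_1,m_2))$. *)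

(* Defs.v *)
From HB Require Import structures.
From mathcomp Require Import all_boot.
From Stdlib Require Import Reals.
Set Implicit Arguments. Unset Strict Implicit. Unset Printing Implicit Defensive.
Local Open Scope R_scope.

Lemma Rplus_assoc' : associative Rplus.
Proof. by move=> x y z; rewrite Rplus_assoc. Qed.
HB.instance Definition _ := Monoid.isComLaw.Build R 0 Rplus Rplus_assoc' Rplus_comm Rplus_0_l.

Notation "\rsum_ ( i 'in' A ) F" := (\big[Rplus/0]_(i in A) F)
  (at level 41, F at level 41, i, A at level 50).
Notation "\rsum_ ( i : T ) F" := (\big[Rplus/0]_(i : T) F)
  (at level 41, F at level 41, i at level 50).

Definition log2 (x : R) : R := ln x / ln 2.

Definition is_lower_bound (E : R -> Prop) (m : R) : Prop := forall x, E x -> m <= x.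
Definition is_glb (E : R -> Prop) (m : R) : Prop :=
  is_lower_bound E m /\ (forall b, is_lower_bound E b -> b <= m).

Definition is_distr (T : finType) (p : T -> R) : Prop :=
  (forall t, 0 <= p t) /\ \rsum_(t : T) p t = 1.

Section Info.
Variables (A B : finType) (P : A -> B -> R).

Definition margA (a : A) : R := \rsum_(b : B) P a b.
Definition margB (b : B) : R := \rsum_(a : A) P a b.

Definition massP (S : {set A * B}) : R := \rsum_(x in S) P x.1 x.2.
Definition massProd (S : {set A * B}) : R := \rsum_(x in S) (margA x.1 * margB x.2).

Definition I0_candidates (eps : R) (r : R) : Prop :=
  exists S : {set A * B}, 1 - eps <= massP S /\ r = - log2 (massProd S).

(* I0 eps r  <->  r = I_0^eps[A;B] (smooth min Renyi divergence) *)
Definition I0 (eps r : R) : Prop := is_lub (I0_candidates eps) r.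

(* sup_{x in G} log (P x / (P_A P_B) x); points with P x = 0 contribute
   log 0 = -infinity and hence are omitted from the supremum *)
Definition Imax_on (G : {set A * B}) (r : R) : Prop :=
  is_lub (fun t => exists x, x \in G /\ 0 < P x.1 x.2 /\
                    t = log2 (P x.1 x.2 / (margA x.1 * margB x.2))) r.

Definition Iinf_candidates (eps : R) (r : R) : Prop :=
  exists G : {set A * B}, 1 - eps < massP G /\ Imax_on G r.

(* Iinf eps r  <->  r = I_infty^eps[A;B] (smooth max Renyi divergence) *)
Definition Iinf (eps r : R) : Prop := is_glb (Iinf_candidates eps) r.
End Info.

(* Broadcast channel W y z x = p(y,z|x) *)
Definition is_bc_channel (X Y Z : finType) (W : Y -> Z -> X -> R) : Prop :=
  (forall y z x, 0 <= W y z x) /\ (forall x, \rsum_(yz : Y * Z) W yz.1 yz.2 x = 1).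

Definition joint_UY (U V X Y Z : finType) (pUV : U -> V -> R) (f : U -> V -> X)
  (W : Y -> Z -> X -> R) (u : U) (y : Y) : R :=
  \rsum_(v : V) (pUV u v * \rsum_(z : Z) W y z (f u v)).
Definition joint_VZ (U V X Y Z : finType) (pUV : U -> V -> R) (f : U -> V -> X)
  (W : Y -> Z -> X -> R) (v : V) (z : Z) : R :=
  \rsum_(u : U) (pUV u v * \rsum_(y : Y) W y z (f u v)).

(* An (R1,R2,eps)-code with M1 = 2^R1, M2 = 2^R2 messages: average error
   probability for uniformly distributed messages is at most eps. *)
Definition error_prob (X Y Z : finType) (W : Y -> Z -> X -> R) (M1 M2 : nat)
  (F : 'I_M1 -> 'I_M2 -> X) (D1 : Y -> 'I_M1) (D2 : Z -> 'I_M2) : R :=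
  / (INR M1 * INR M2) *
  \rsum_(m : 'I_M1 * 'I_M2)
    \rsum_(yz : Y * Z)
      (if (D1 yz.1 == m.1) && (D2 yz.2 == m.2) then 0 else W yz.1 yz.2 (F m.1 m.2)).

Definition is_code (X Y Z : finType) (W : Y -> Z -> X -> R) (M1 M2 : nat) (eps : R) : Prop :=
  exists (F : 'I_M1 -> 'I_M2 -> X) (D1 : Y -> 'I_M1) (D2 : Z -> 'I_M2),
    error_prob W F D1 D2 <= eps.

(* Main.v *)
Require Import Defs.
From HB Require Import structures.
From mathcomp Require Import all_boot.
From Stdlib Require Import Reals Lra IndefiniteDescription.
Local Open Scope R_scope.
Set Implicit Arguments. Unset Strict Implicit. Unset Printing Implicit Defensive.

Lemma Rmult_assoc' : associative Rmult.
Proof. by move=> x y z; rewrite Rmult_assoc. Qed.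
HB.instance Definition _ := Monoid.isComLaw.Build R 1 Rmult Rmult_assoc' Rmult_comm Rmult_1_l.
HB.instance Definition _ := Monoid.isMulLaw.Build R 0 Rmult Rmult_0_l Rmult_0_r.
HB.instance Definition _ := Monoid.isAddLaw.Build R Rmult Rplus Rmult_plus_distr_r Rmult_plus_distr_l.


Lemma rsum_distrl (I : Type) (r : seq I) (P : pred I) (F : I -> R) a :
  \big[Rplus/0]_(i <- r | P i) F i * a = \big[Rplus/0]_(i <- r | P i) (F i * a).
Proof. exact: (@big_distrl R 0 Rmult Rplus). Qed.
Lemma rsum_distrr (I : Type) (r : seq I) (P : pred I) (F : I -> R) a :
  a * \big[Rplus/0]_(i <- r | P i) F i = \big[Rplus/0]_(i <- r | P i) (a * F i).
Proof. exact: (@big_distrr R 0 Rmult Rplus). Qed.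
Lemma rprod_rsum (I J : finType) (F : I -> J -> R) :
  \big[Rmult/1]_(i : I) \big[Rplus/0]_(j : J) F i j
    = \big[Rplus/0]_(f : {ffun I -> J}) \big[Rmult/1]_i F i (f i).
Proof. exact: (@bigA_distr_bigA R 0 1 Rmult Rplus). Qed.

Lemma rsum_le (I : Type) (r : seq I) (P : pred I) (F G : I -> R) :
  (forall i, P i -> F i <= G i) ->
  \big[Rplus/0]_(i <- r | P i) F i <= \big[Rplus/0]_(i <- r | P i) G i.
Proof.
move=> H; apply: (big_ind2 (fun x y => x <= y)) => //; first lra.
by move=> ? ? ? ? ? ?; lra.
Qed.

Lemma rsum_ge0 (I : Type) (r : seq I) (P : pred I) (F : I -> R) :
  (forall i, P i -> 0 <= F i) -> 0 <= \big[Rplus/0]_(i <- r | P i) F i.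
Proof.
move=> H; apply: (big_ind (fun x => 0 <= x)) => //; first lra.
by move=> ? ? ? ?; lra.
Qed.

Lemma rprod_ge0 (I : Type) (r : seq I) (P : pred I) (F : I -> R) :
  (forall i, P i -> 0 <= F i) -> 0 <= \big[Rmult/1]_(i <- r | P i) F i.
Proof.
move=> H; apply: (big_ind (fun x => 0 <= x)) => //; first lra.
by move=> ? ? ? ?; apply: Rmult_le_pos.
Qed.

Lemma rsum_sub (I : finType) (P : pred I) (F : I -> R) :
  (forall i, 0 <= F i) -> \big[Rplus/0]_(i | P i) F i <= \big[Rplus/0]_(i : I) F i.
Proof.
move=> H; rewrite big_mkcond /=; apply: rsum_le => i _.
case: (P i); [lra | exact: H].
Qed.

Lemma rsum_term (I : finType) (F : I -> R) i0 :
  (forall i, 0 <= F i) -> F i0 <= \big[Rplus/0]_(i : I) F i.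
Proof.
move=> H; rewrite (bigD1 i0) //=.
have := @rsum_ge0 I (index_enum I) (fun i => i != i0) F (fun i _ => H i); lra.
Qed.

Lemma rsum_const (I : finType) (c : R) :
  \big[Rplus/0]_(i : I) c = INR #|I| * c.
Proof.
rewrite big_const; elim: #|I| => [|n IH]; first by rewrite /=; lra.
change (iter n.+1 (Rplus c) 0) with (c + iter n (Rplus c) 0)%R. rewrite S_INR IH; lra.
Qed.

Lemma rsum_ind (A : finType) (a : A) (F : A -> R) :
  \big[Rplus/0]_(x : A) (if x == a then F x else 0) = F a.
Proof. by rewrite -big_mkcond /= big_pred1_eq. Qed.

Lemma rsum_ind' (A : finType) (a : A) (F : A -> R) :
  \big[Rplus/0]_(x : A) (if a == x then F x else 0) = F a.
Proof.
rewrite -(rsum_ind a F); apply: eq_bigr => x _; by rewrite eq_sym.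
Qed.

Lemma exists_min (T : finType) (g : T -> R) (t0 : T) :
  exists x, forall y, g x <= g y.
Proof.
have : forall s : seq T, exists x, forall y, y \in s -> g x <= g y.
  elim=> [|a s [x Hx]]; first by exists t0.
  case: (Rle_dec (g a) (g x)) => Ha.
    exists a => y; rewrite in_cons => /orP [/eqP -> | /Hx]; lra.
  exists x => y; rewrite in_cons => /orP [/eqP -> | /Hx] //; lra.
move/(_ (enum T)) => [x Hx]; exists x => y; apply: Hx; by rewrite mem_enum.
Qed.
Section Codebook.
Variables (T A : finType) (p : A -> R).
Hypothesis p_ge0 : forall a, 0 <= p a.
Hypothesis p_sum1 : \big[Rplus/0]_(a : A) p a = 1.

Definition wt (c : {ffun T -> A}) := \big[Rmult/1]_(i : T) p (c i).
Definition E (g : {ffun T -> A} -> R) := \big[Rplus/0]_(c : {ffun T -> A}) (wt c * g c).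

Lemma wt_ge0 c : 0 <= wt c.
Proof. by apply: rprod_ge0 => i _. Qed.

Lemma E_ext g g' : (forall c, g c = g' c) -> E g = E g'.
Proof. by move=> H; apply: eq_bigr => c _; rewrite H. Qed.

Lemma E_le g g' : (forall c, g c <= g' c) -> E g <= E g'.
Proof.
move=> H; apply: rsum_le => c _; apply: Rmult_le_compat_l; [exact: wt_ge0 | exact: H].
Qed.

Lemma E_ge0 g : (forall c, 0 <= g c) -> 0 <= E g.
Proof. move=> H; apply: rsum_ge0 => c _; apply: Rmult_le_pos; [exact: wt_ge0|exact: H]. Qed.

Lemma E_add g g' : E (fun c => g c + g' c) = E g + E g'.
Proof. rewrite /E -big_split /=; apply: eq_bigr => c _; lra. Qed.

Lemma E_scal k g : E (fun c => k * g c) = k * E g.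
Proof. rewrite /E rsum_distrr; apply: eq_bigr => c _; lra. Qed.

Lemma E_sum (B : finType) (F : B -> {ffun T -> A} -> R) :
  E (fun c => \big[Rplus/0]_(x : B) F x c) = \big[Rplus/0]_(x : B) E (F x).
Proof.
rewrite /E (exchange_big) /=; apply: eq_bigr => c _; by rewrite rsum_distrr.
Qed.

Lemma E_prodf (h : T -> A -> R) :
  E (fun c => \big[Rmult/1]_(t : T) h t (c t)) =
  \big[Rmult/1]_(t : T) \big[Rplus/0]_(a : A) (p a * h t a).
Proof.
rewrite rprod_rsum /E /wt; apply: eq_bigr => c _; by rewrite -big_split.
Qed.

Lemma E_const k : E (fun _ => k) = k.
Proof.
have H1 : E (fun c => \big[Rmult/1]_(t : T) 1) = 1.
  rewrite (E_prodf (fun _ _ => 1)) big1 // => t _.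
  rewrite -{2}p_sum1; apply: eq_bigr => a _; lra.
rewrite -{2}(Rmult_1_r k) -H1 -E_scal; apply: E_ext => c; rewrite big1_eq; lra.
Qed.

Lemma E1 (i : T) (g : A -> R) : E (fun c => g (c i)) = \big[Rplus/0]_(a : A) (p a * g a).
Proof.
pose h t := if t == i then g else (fun _ : A => 1).
rewrite (E_ext (g' := fun c => \big[Rmult/1]_(t : T) h t (c t))).
  rewrite E_prodf (bigD1 i) //= [X in _ * X]big1; first by rewrite /h eqxx Rmult_1_r.
  move=> t /negbTE ti; rewrite /h ti.
  rewrite -{2}p_sum1; apply: eq_bigr => a _; lra.
move=> c; rewrite (bigD1 i) //= [X in _ * X]big1; first by rewrite /h eqxx Rmult_1_r.
by move=> t /negbTE ti; rewrite /h ti.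
Qed.

Lemma E2 (i i' : T) (g0 g1 : A -> R) : i != i' ->
  E (fun c => g0 (c i) * g1 (c i')) =
  \big[Rplus/0]_(a : A) (p a * g0 a) * \big[Rplus/0]_(a : A) (p a * g1 a).
Proof.
move=> nii.
pose h t := if t == i then g0 else if t == i' then g1 else (fun _ : A => 1).
have hi' : h i' = g1 by rewrite /h eq_sym (negbTE nii) eqxx.
rewrite (E_ext (g' := fun c => \big[Rmult/1]_(t : T) h t (c t))).
  rewrite E_prodf (bigD1 i) //= (bigD1 i') 1?eq_sym //= [X in _ * (_ * X)]big1.
    by rewrite hi' /h eqxx Rmult_1_r.
  move=> t /andP [ti' ti]; rewrite /h (negbTE ti) (negbTE ti').
  rewrite -{2}p_sum1; apply: eq_bigr => a _; lra.
move=> c; rewrite (bigD1 i) //= (bigD1 i') 1?eq_sym //= [X in _ * (_ * X)]big1.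
  by rewrite hi' /h eqxx Rmult_1_r.
by move=> t /andP [ti' ti]; rewrite /h (negbTE ti) (negbTE ti').
Qed.

Lemma E2g (i i' : T) (g : A -> A -> R) : i != i' ->
  E (fun c => g (c i) (c i')) =
  \big[Rplus/0]_(a : A) (p a * \big[Rplus/0]_(b : A) (p b * g a b)).
Proof.
move=> nii.
rewrite (E_ext (g' := fun c => \big[Rplus/0]_(a : A) \big[Rplus/0]_(b : A)
   (g a b * ((if c i == a then 1 else 0) * (if c i' == b then 1 else 0))))).
  rewrite E_sum; apply: eq_bigr => a _; rewrite E_sum rsum_distrr; apply: eq_bigr => b _.
  rewrite E_scal (@E2 i i' (fun x => if x == a then 1 else 0) (fun x => if x == b then 1 else 0)) //.
  rewrite (eq_bigr (fun x => if x == a then p x else 0)); last by move=> x _; case: (x == a); lra.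
  rewrite [X in _ * (_ * X)](eq_bigr (fun x => if x == b then p x else 0)); last by move=> x _; case: (x == b); lra.
  rewrite !rsum_ind; lra.
move=> c; rewrite (bigD1 (c i)) //= [X in _ + X]big1; last first.
  move=> a /negbTE na; rewrite big1 // => b _; rewrite eq_sym na; lra.
rewrite Rplus_0_r (bigD1 (c i')) //= [X in _ + X]big1; last first.
  move=> b /negbTE nb; rewrite eq_sym nb; lra.
rewrite !eqxx; lra.
Qed.

Lemma E_exists (a0 : A) g k : E g <= k -> exists c, g c <= k.
Proof.
move=> H; have [c0 Hc0] := exists_min g [ffun => a0].
exists c0; apply: Rle_trans H.
rewrite -{1}(E_const (g c0)); exact: E_le.
Qed.

End Codebook.
Section Dec.
Variables (A B O : finType) (P : A -> B -> R) (K : A -> B -> O -> R)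
  (S : {set A * O}) (r : A -> B -> R).
Hypothesis P_ge0 : forall a b, 0 <= P a b.
Hypothesis P_sum1 : \big[Rplus/0]_(a : A) \big[Rplus/0]_(b : B) P a b = 1.
Hypothesis K_ge0 : forall a b o, 0 <= K a b o.
Hypothesis K_sum1 : forall a b, \big[Rplus/0]_(o : O) K a b o = 1.
Hypothesis r_ge0 : forall a b, 0 <= r a b.
Hypothesis r_le : forall a b, margA P a * margB P b * r a b <= P a b.

Let pA := margA P.
Let pB := margB P.
Let J := fun a o => \big[Rplus/0]_(b : B) (P a b * K a b o).

Lemma pA_ge0 a : 0 <= pA a. Proof. by apply: rsum_ge0 => b _. Qed.
Lemma pB_ge0 b : 0 <= pB b. Proof. by apply: rsum_ge0 => a _. Qed.
Lemma pA_sum1 : \big[Rplus/0]_(a : A) pA a = 1. Proof. exact: P_sum1. Qed.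
Lemma pB_sum1 : \big[Rplus/0]_(b : B) pB b = 1.
Proof. by rewrite /pB /margB exchange_big. Qed.

Lemma margA_J a : margA J a = pA a.
Proof.
rewrite /margA /J exchange_big /pA /margA; apply: eq_bigr => b _.
by rewrite -rsum_distrr K_sum1 Rmult_1_r.
Qed.

Lemma J_sum1 : \big[Rplus/0]_(x : A * O) J x.1 x.2 = 1.
Proof.
rewrite -(pair_big xpredT xpredT (fun a o => J a o)) /=.
rewrite -pA_sum1; apply: eq_bigr => a _; exact: margA_J.
Qed.

Lemma massP_compl :
  1 - massP J S = \big[Rplus/0]_(a : A) \big[Rplus/0]_(o : O)
     (if (a, o) \in S then 0 else J a o).
Proof.
rewrite /massP -J_sum1 (bigID (fun x => x \in S) xpredT) /=.
rewrite (pair_big xpredT xpredT (fun a o => if (a, o) \in S then 0 else J a o)) /=.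
set s1 := \big[Rplus/0]_(i | i \in S) _.
have -> : \big[Rplus/0]_(i | i \notin S) J i.1 i.2 =
   \big[Rplus/0]_(i : A * O) (if (i.1, i.2) \in S then 0 else J i.1 i.2).
  rewrite big_mkcond; apply: eq_bigr => -[a o] _ /=; by case: ((a, o) \in S).
rewrite Rplus_comm /Rminus Rplus_assoc Rplus_opp_r Rplus_0_r; reflexivity.
Qed.

Lemma massProd_eq :
  massProd J S = \big[Rplus/0]_(a : A) \big[Rplus/0]_(o : O)
     (if (a, o) \in S then pA a * margB J o else 0).
Proof.
rewrite /massProd big_mkcond /=.
rewrite (pair_big xpredT xpredT (fun a o => if (a, o) \in S then pA a * margB J o else 0)) /=.
apply: eq_bigr => -[a o] _ /=; by rewrite margA_J.
Qed.

Variables (I1 I2 : finType) (a0 i0 : I1) (b0 : I2).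
Hypothesis ai : a0 != i0.

Lemma dec_a :
  E pA (fun cA => E pB (fun cB => r (cA a0) (cB b0) *
     \big[Rplus/0]_(o : O) (K (cA a0) (cB b0) o * (if (cA a0, o) \in S then 0 else 1))))
  <= 1 - massP J S.
Proof.
rewrite (E_ext _ (g' := fun cA => \big[Rplus/0]_(b : B) (pB b * (r (cA a0) b *
     \big[Rplus/0]_(o : O) (K (cA a0) b o * (if (cA a0, o) \in S then 0 else 1)))))); last first.
  move=> cA; exact: (E1 pB_sum1 b0 (fun b => r (cA a0) b *
     \big[Rplus/0]_(o : O) (K (cA a0) b o * (if (cA a0, o) \in S then 0 else 1)))).
rewrite (E1 pA_sum1 a0 (fun a => \big[Rplus/0]_(b : B) (pB b * (r a b *
     \big[Rplus/0]_(o : O) (K a b o * (if (a, o) \in S then 0 else 1)))))).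
rewrite massP_compl; apply: rsum_le => a _.
rewrite rsum_distrr /J.
apply: (@Rle_trans _ (\big[Rplus/0]_(b : B) (P a b *
     \big[Rplus/0]_(o : O) (K a b o * (if (a, o) \in S then 0 else 1)))) _).
  apply: rsum_le => b _.
  have h1 : 0 <= \big[Rplus/0]_(o : O) (K a b o * (if (a, o) \in S then 0 else 1)).
    apply: rsum_ge0 => o _; case: ((a, o) \in S); rewrite ?Rmult_0_r ?Rmult_1_r; [lra|exact: K_ge0].
  have := r_le a b; rewrite -/pA -/pB => h2.
  have -> : pA a * (pB b * (r a b * \big[Rplus/0]_(o : O) (K a b o * (if (a, o) \in S then 0 else 1))))
     = (pA a * pB b * r a b) * \big[Rplus/0]_(o : O) (K a b o * (if (a, o) \in S then 0 else 1)) by ring.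
  by apply: Rmult_le_compat_r.
apply: Req_le.
rewrite (eq_bigr (fun b => \big[Rplus/0]_(o : O) (P a b * (K a b o * (if (a, o) \in S then 0 else 1))))); last by move=> b _; rewrite rsum_distrr.
rewrite exchange_big /=; apply: eq_bigr => o _.
case: ((a, o) \in S).
  by apply: big1 => b _; rewrite Rmult_0_r Rmult_0_r.
by apply: eq_bigr => b _; rewrite Rmult_1_r.
Qed.

Lemma dec_b :
  E pA (fun cA => E pB (fun cB => r (cA a0) (cB b0) *
     \big[Rplus/0]_(o : O) (K (cA a0) (cB b0) o * (if (cA i0, o) \in S then 1 else 0))))
  <= massProd J S.
Proof.
rewrite (E_ext _ (g' := fun cA => \big[Rplus/0]_(b : B) (pB b * (r (cA a0) b *
     \big[Rplus/0]_(o : O) (K (cA a0) b o * (if (cA i0, o) \in S then 1 else 0)))))); last first.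
  move=> cA; exact: (E1 pB_sum1 b0 (fun b => r (cA a0) b *
     \big[Rplus/0]_(o : O) (K (cA a0) b o * (if (cA i0, o) \in S then 1 else 0)))).
rewrite (E2g pA_sum1 (fun a a' => \big[Rplus/0]_(b : B) (pB b * (r a b *
     \big[Rplus/0]_(o : O) (K a b o * (if (a', o) \in S then 1 else 0)))))) //.
rewrite massProd_eq.
rewrite (eq_bigr (fun a => \big[Rplus/0]_(a' : A) (pA a * (pA a' * \big[Rplus/0]_(b : B) (pB b * (r a b *
     \big[Rplus/0]_(o : O) (K a b o * (if (a', o) \in S then 1 else 0)))))))); last first.
  by move=> a _; rewrite rsum_distrr.
rewrite exchange_big /=; apply: rsum_le => a' _.
apply: (@Rle_trans _ (pA a' * \big[Rplus/0]_(a : A) \big[Rplus/0]_(b : B) (P a b *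
     \big[Rplus/0]_(o : O) (K a b o * (if (a', o) \in S then 1 else 0)))) _).
  rewrite rsum_distrr; apply: rsum_le => a _.
  rewrite Rmult_comm Rmult_assoc; apply: Rmult_le_compat_l; first exact: pA_ge0.
  rewrite Rmult_comm rsum_distrr; apply: rsum_le => b _.
  have h1 : 0 <= \big[Rplus/0]_(o : O) (K a b o * (if (a', o) \in S then 1 else 0)).
    apply: rsum_ge0 => o _; case: ((a', o) \in S); rewrite ?Rmult_0_r ?Rmult_1_r; [exact: K_ge0|lra].
  have := r_le a b; rewrite -/pA -/pB => h2.
  have -> : pA a * (pB b * (r a b * \big[Rplus/0]_(o : O) (K a b o * (if (a', o) \in S then 1 else 0))))
     = ((pA a * pB b * r a b) * \big[Rplus/0]_(o : O) (K a b o * (if (a', o) \in S then 1 else 0))) by ring.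
  by apply: Rmult_le_compat_r.
apply: Req_le.
have -> : \big[Rplus/0]_(a : A) \big[Rplus/0]_(b : B) (P a b *
     \big[Rplus/0]_(o : O) (K a b o * (if (a', o) \in S then 1 else 0)))
   = \big[Rplus/0]_(o : O) ((if (a', o) \in S then 1 else 0) * margB J o).
  rewrite /margB /J.
  rewrite (eq_bigr (fun a => \big[Rplus/0]_(o : O) \big[Rplus/0]_(b : B) (P a b * (K a b o * (if (a', o) \in S then 1 else 0))))); last first.
    move=> a _; rewrite (eq_bigr (fun b => \big[Rplus/0]_(o : O) (P a b * (K a b o * (if (a', o) \in S then 1 else 0))))); first by rewrite exchange_big.
    by move=> b _; rewrite rsum_distrr.
  rewrite exchange_big /=; apply: eq_bigr => o _.
  rewrite rsum_distrr; apply: eq_bigr => a _; rewrite rsum_distrr; apply: eq_bigr => b _; ring.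
rewrite rsum_distrr; apply: eq_bigr => o _.
case: ((a', o) \in S); ring.
Qed.

End Dec.
Section EUV.
Variables (T1 T2 A1 A2 : finType) (p1 : A1 -> R) (p2 : A2 -> R).
Hypothesis p1_ge0 : forall a, 0 <= p1 a.
Hypothesis p2_ge0 : forall a, 0 <= p2 a.
Hypothesis p1_sum1 : \big[Rplus/0]_(a : A1) p1 a = 1.
Hypothesis p2_sum1 : \big[Rplus/0]_(a : A2) p2 a = 1.

Definition EUV (h : {ffun T1 -> A1} -> {ffun T2 -> A2} -> R) :=
  E p1 (fun c1 => E p2 (fun c2 => h c1 c2)).

Lemma EUV_le h h' : (forall c1 c2, h c1 c2 <= h' c1 c2) -> EUV h <= EUV h'.
Proof. move=> H; apply: E_le => // c1; apply: E_le => // c2; exact: H. Qed.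

Lemma EUV_ext h h' : (forall c1 c2, h c1 c2 = h' c1 c2) -> EUV h = EUV h'.
Proof. move=> H; apply: E_ext => c1; apply: E_ext => c2; exact: H. Qed.

Lemma EUV_add h h' : EUV (fun c1 c2 => h c1 c2 + h' c1 c2) = EUV h + EUV h'.
Proof. rewrite /EUV -E_add; apply: E_ext => c1; exact: E_add. Qed.

Lemma EUV_scal k h : EUV (fun c1 c2 => k * h c1 c2) = k * EUV h.
Proof. rewrite /EUV -E_scal; apply: E_ext => c1; exact: E_scal. Qed.

Lemma EUV_sum (B : finType) (F : B -> {ffun T1 -> A1} -> {ffun T2 -> A2} -> R) :
  EUV (fun c1 c2 => \big[Rplus/0]_(x : B) F x c1 c2) = \big[Rplus/0]_(x : B) EUV (F x).
Proof. rewrite /EUV -E_sum; apply: E_ext => c1; exact: E_sum. Qed.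

Lemma EUV_const k : EUV (fun _ _ => k) = k.
Proof. rewrite /EUV (E_ext _ (g' := fun _ => k)) ?E_const // => c1; exact: E_const. Qed.

Lemma EUV_11 (a : T1) (b : T2) (g : A1 -> A2 -> R) :
  EUV (fun c1 c2 => g (c1 a) (c2 b)) =
  \big[Rplus/0]_(u : A1) (p1 u * \big[Rplus/0]_(v : A2) (p2 v * g u v)).
Proof.
rewrite /EUV (E_ext _ (g' := fun c1 => \big[Rplus/0]_(v : A2) (p2 v * g (c1 a) v))).
  exact: (E1 p1_sum1 a (fun u => \big[Rplus/0]_(v : A2) (p2 v * g u v))).
move=> c1; exact: (E1 p2_sum1 b (fun v => g (c1 a) v)).
Qed.

Lemma EUV_21 (a a' : T1) (b : T2) (g : A1 -> A1 -> A2 -> R) : a != a' ->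
  EUV (fun c1 c2 => g (c1 a) (c1 a') (c2 b)) =
  \big[Rplus/0]_(u : A1) (p1 u * \big[Rplus/0]_(u' : A1) (p1 u' *
     \big[Rplus/0]_(v : A2) (p2 v * g u u' v))).
Proof.
move=> aa.
rewrite /EUV (E_ext _ (g' := fun c1 => \big[Rplus/0]_(v : A2) (p2 v * g (c1 a) (c1 a') v))).
  exact: (E2g p1_sum1 (fun u u' => \big[Rplus/0]_(v : A2) (p2 v * g u u' v)) aa).
move=> c1; exact: (E1 p2_sum1 b (fun v => g (c1 a) (c1 a') v)).
Qed.

Lemma EUV_12 (a : T1) (b b' : T2) (g : A1 -> A2 -> A2 -> R) : b != b' ->
  EUV (fun c1 c2 => g (c1 a) (c2 b) (c2 b')) =
  \big[Rplus/0]_(u : A1) (p1 u * \big[Rplus/0]_(v : A2) (p2 v *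
     \big[Rplus/0]_(v' : A2) (p2 v' * g u v v'))).
Proof.
move=> bb.
rewrite /EUV (E_ext _ (g' := fun c1 => \big[Rplus/0]_(v : A2) (p2 v *
     \big[Rplus/0]_(v' : A2) (p2 v' * g (c1 a) v v')))).
  exact: (E1 p1_sum1 a (fun u => \big[Rplus/0]_(v : A2) (p2 v *
     \big[Rplus/0]_(v' : A2) (p2 v' * g u v v')))).
move=> c1; exact: (E2g p2_sum1 (fun v v' => g (c1 a) v v') bb).
Qed.

Lemma EUV_22 (a a' : T1) (b b' : T2) (g : A1 -> A1 -> A2 -> A2 -> R) : a != a' -> b != b' ->
  EUV (fun c1 c2 => g (c1 a) (c1 a') (c2 b) (c2 b')) =
  \big[Rplus/0]_(u : A1) (p1 u * \big[Rplus/0]_(u' : A1) (p1 u' *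
  \big[Rplus/0]_(v : A2) (p2 v * \big[Rplus/0]_(v' : A2) (p2 v' * g u u' v v')))).
Proof.
move=> aa bb.
rewrite /EUV (E_ext _ (g' := fun c1 => \big[Rplus/0]_(v : A2) (p2 v *
     \big[Rplus/0]_(v' : A2) (p2 v' * g (c1 a) (c1 a') v v')))).
  exact: (E2g p1_sum1 (fun u u' => \big[Rplus/0]_(v : A2) (p2 v *
     \big[Rplus/0]_(v' : A2) (p2 v' * g u u' v v'))) aa).
move=> c1; exact: (E2g p2_sum1 (fun v v' => g (c1 a) (c1 a') v v') bb).
Qed.

End EUV.

Lemma EUV_swap (T1 T2 A1 A2 : finType) (p1 : A1 -> R) (p2 : A2 -> R)
  (h : {ffun T1 -> A1} -> {ffun T2 -> A2} -> R) :
  EUV p1 p2 h = EUV p2 p1 (fun c2 c1 => h c1 c2).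
Proof.
rewrite /EUV /E.
rewrite (eq_bigr (fun c1 => \big[Rplus/0]_(c2 : {ffun T2 -> A2}) (wt p1 c1 * (wt p2 c2 * h c1 c2)))); last first.
  by move=> c1 _; rewrite rsum_distrr.
rewrite exchange_big /=; apply: eq_bigr => c2 _; rewrite rsum_distrr; apply: eq_bigr => c1 _; ring.
Qed.
Section Coding.
Variables (X Y Z U V : finType) (W : Y -> Z -> X -> R) (pUV : U -> V -> R) (f : U -> V -> X).
Hypothesis W_ge0 : forall y z x, 0 <= W y z x.
Hypothesis W_sum1 : forall x, \big[Rplus/0]_(yz : Y * Z) W yz.1 yz.2 x = 1.
Hypothesis P_ge0 : forall u v, 0 <= pUV u v.
Hypothesis P_sum1 : \big[Rplus/0]_(u : U) \big[Rplus/0]_(v : V) pUV u v = 1.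
Variables (S1 : {set U * Y}) (S2 : {set V * Z}) (G : {set U * V}) (c : R).
Hypothesis c_ge0 : 0 <= c.
Hypothesis G_bound : forall u v, (u, v) \in G -> 0 < pUV u v ->
  pUV u v <= c * (margA pUV u * margB pUV v).
Hypothesis mu_pos : 0 < massP pUV G.

Let pU := margA pUV.
Let pV := margB pUV.
Let mu := massP pUV G.

Lemma pU_ge0 u : 0 <= pU u. Proof. by apply: rsum_ge0 => v _. Qed.
Lemma pV_ge0 v : 0 <= pV v. Proof. by apply: rsum_ge0 => u _. Qed.
Lemma pU_sum1 : \big[Rplus/0]_(u : U) pU u = 1. Proof. exact: P_sum1. Qed.
Lemma pV_sum1 : \big[Rplus/0]_(v : V) pV v = 1.
Proof. by rewrite /pV /margB exchange_big. Qed.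
Lemma P_le_pU u v : pUV u v <= pU u.
Proof. exact: (rsum_term (F := fun v => pUV u v)). Qed.
Lemma P_le_pV u v : pUV u v <= pV v.
Proof. exact: (rsum_term (F := fun u => pUV u v)). Qed.

Definition r u v := if (u, v) \in G then pUV u v / (pU u * pV v) else 0.

Lemma r_ge0 u v : 0 <= r u v.
Proof.
rewrite /r; case: ((u, v) \in G); last lra.
have h1 := pU_ge0 u; have h2 := pV_ge0 v; have h3 := P_ge0 u v.
case: (Rle_lt_or_eq_dec 0 (pU u * pV v) (Rmult_le_pos _ _ h1 h2)) => h.
  apply: Rmult_le_pos => //; apply: Rlt_le; exact: Rinv_0_lt_compat.
rewrite /Rdiv -h Rinv_0 Rmult_0_r; lra.
Qed.

Lemma r_mul u v : pU u * pV v * r u v = if (u, v) \in G then pUV u v else 0.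
Proof.
rewrite /r; case: ((u, v) \in G); last lra.
have h1 := pU_ge0 u; have h2 := pV_ge0 v; have h3 := P_ge0 u v.
have h4 := P_le_pU u v; have h5 := P_le_pV u v.
case: (Req_dec (pU u * pV v) 0) => h.
  rewrite h Rmult_0_l.
  case: (Rmult_integral _ _ h) => h'; lra.
by rewrite /Rdiv Rmult_comm Rmult_assoc Rinv_l // Rmult_1_r.
Qed.

Lemma r_le_P u v : margA pUV u * margB pUV v * r u v <= pUV u v.
Proof.
rewrite -/pU -/pV r_mul; case: ((u, v) \in G); [lra | exact: P_ge0].
Qed.

Lemma r_le_c u v : r u v <= c.
Proof.
rewrite /r; case: ifP => hG; last lra.
have h1 := pU_ge0 u; have h2 := pV_ge0 v; have h3 := P_ge0 u v.
have h4 := P_le_pU u v; have h5 := P_le_pV u v.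
case: (Rle_lt_or_eq_dec 0 (pUV u v) h3) => h.
  have := G_bound hG h; rewrite -/pU -/pV => hb.
  have hp : 0 < pU u * pV v by apply: Rmult_lt_0_compat; lra.
  apply: (Rmult_le_reg_r (pU u * pV v)) => //.
  rewrite /Rdiv Rmult_assoc Rinv_l; lra.
rewrite -h /Rdiv Rmult_0_l; lra.
Qed.

Lemma mu_eq : mu = \big[Rplus/0]_(u : U) \big[Rplus/0]_(v : V) (if (u, v) \in G then pUV u v else 0).
Proof.
rewrite /mu /massP big_mkcond /=.
rewrite (pair_big xpredT xpredT (fun u v => if (u, v) \in G then pUV u v else 0)) /=.
by apply: eq_bigr => -[u v] _.
Qed.

Definition rowU u := \big[Rplus/0]_(v : V) (pV v * r u v).
Definition colV v := \big[Rplus/0]_(u : U) (pU u * r u v).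

Lemma rowU_ge0 u : 0 <= rowU u.
Proof. apply: rsum_ge0 => v _; apply: Rmult_le_pos; [exact: pV_ge0|exact: r_ge0]. Qed.
Lemma colV_ge0 v : 0 <= colV v.
Proof. apply: rsum_ge0 => u _; apply: Rmult_le_pos; [exact: pU_ge0|exact: r_ge0]. Qed.

Lemma rowU_mu : \big[Rplus/0]_(u : U) (pU u * rowU u) = mu.
Proof.
rewrite mu_eq; apply: eq_bigr => u _; rewrite /rowU rsum_distrr; apply: eq_bigr => v _.
by rewrite -r_mul; ring.
Qed.

Lemma colV_mu : \big[Rplus/0]_(v : V) (pV v * colV v) = mu.
Proof.
rewrite -rowU_mu /rowU /colV.
rewrite (eq_bigr (fun v => \big[Rplus/0]_(u : U) (pU u * (pV v * r u v)))); last first.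
  by move=> v _; rewrite rsum_distrr; apply: eq_bigr => u _; ring.
rewrite exchange_big /=; apply: eq_bigr => u _; by rewrite rsum_distrr.
Qed.

Lemma rowU_le1 u : rowU u <= 1.
Proof.
case: (Rle_lt_or_eq_dec 0 (pU u) (pU_ge0 u)) => h.
  apply: (Rmult_le_reg_l (pU u)) => //; rewrite Rmult_1_r /rowU rsum_distrr.
  rewrite /pU /margA; apply: rsum_le => v _.
  have := r_mul u v; rewrite -/pU => e.
  have -> : pU u * (pV v * r u v) = pU u * pV v * r u v by ring.
  rewrite e; case: ifP => _; [lra | exact: P_ge0].
rewrite /rowU big1; first lra.
move=> v _; rewrite /r; case: ifP => _; last lra.
have := P_ge0 u v; have := P_le_pU u v; rewrite -h => h1 h2.
have -> : pUV u v = 0 by lra.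
rewrite /Rdiv !Rmult_0_l; lra.
Qed.

Lemma colV_le1 v : colV v <= 1.
Proof.
case: (Rle_lt_or_eq_dec 0 (pV v) (pV_ge0 v)) => h.
  apply: (Rmult_le_reg_l (pV v)) => //; rewrite Rmult_1_r /colV rsum_distrr.
  rewrite /pV /margB; apply: rsum_le => u _.
  have := r_mul u v; rewrite -/pV => e.
  have -> : pV v * (pU u * r u v) = pU u * pV v * r u v by ring.
  rewrite e; case: ifP => _; [lra | exact: P_ge0].
rewrite /colV big1; first lra.
move=> u _; rewrite /r; case: ifP => _; last lra.
have := P_ge0 u v; have := P_le_pV u v; rewrite -h => h1 h2.
have -> : pUV u v = 0 by lra.
rewrite /Rdiv !Rmult_0_l; lra.
Qed.

Lemma Q0 : \big[Rplus/0]_(u : U) (pU u * \big[Rplus/0]_(v : V) (pV v * r u v)) = mu.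
Proof. exact: rowU_mu. Qed.

Lemma Q1 : \big[Rplus/0]_(u : U) (pU u * \big[Rplus/0]_(v : V) (pV v * (r u v * r u v))) <= c * mu.
Proof.
rewrite -Q0 rsum_distrr; apply: rsum_le => u _.
have := pU_ge0 u => h; rewrite -Rmult_assoc (Rmult_comm c) Rmult_assoc.
apply: Rmult_le_compat_l => //; rewrite rsum_distrr; apply: rsum_le => v _.
have := pV_ge0 v; have := r_ge0 u v; have := r_le_c u v => h1 h2 h3.
have -> : c * (pV v * r u v) = pV v * (r u v * c) by ring.
apply: Rmult_le_compat_l => //; by apply: Rmult_le_compat_l.
Qed.

Lemma Q2 : \big[Rplus/0]_(u : U) (pU u * \big[Rplus/0]_(v : V) (pV v *
   \big[Rplus/0]_(v' : V) (pV v' * (r u v * r u v')))) <= mu.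
Proof.
rewrite -Q0; apply: rsum_le => u _.
apply: Rmult_le_compat_l; first exact: pU_ge0.
have -> : \big[Rplus/0]_(v : V) (pV v * \big[Rplus/0]_(v' : V) (pV v' * (r u v * r u v')))
   = rowU u * rowU u.
  rewrite /rowU rsum_distrl; apply: eq_bigr => v _.
  rewrite !rsum_distrr; apply: eq_bigr => v' _; ring.
have := rowU_ge0 u; have := rowU_le1 u => h1 h2.
rewrite /rowU in h1 h2 *; nra.
Qed.

Lemma Q3 : \big[Rplus/0]_(u : U) (pU u * \big[Rplus/0]_(u' : U) (pU u' *
   \big[Rplus/0]_(v : V) (pV v * (r u v * r u' v)))) <= mu.
Proof.
have -> : \big[Rplus/0]_(u : U) (pU u * \big[Rplus/0]_(u' : U) (pU u' *
   \big[Rplus/0]_(v : V) (pV v * (r u v * r u' v)))) =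
   \big[Rplus/0]_(v : V) (pV v * (colV v * colV v)).
  rewrite (eq_bigr (fun u => \big[Rplus/0]_(v : V) \big[Rplus/0]_(u' : U) (pU u * (pU u' * (pV v * (r u v * r u' v)))))); last first.
    move=> u _; rewrite rsum_distrr.
    rewrite (eq_bigr (fun u' => \big[Rplus/0]_(v : V) (pU u * (pU u' * (pV v * (r u v * r u' v)))))); last first.
      by move=> u' _; rewrite !rsum_distrr.
    by rewrite exchange_big.
  rewrite exchange_big /=; apply: eq_bigr => v _.
  rewrite /colV rsum_distrl rsum_distrr; apply: eq_bigr => u _.
  rewrite rsum_distrr rsum_distrr; apply: eq_bigr => u' _; ring.
rewrite -colV_mu; apply: rsum_le => v _.
apply: Rmult_le_compat_l; first exact: pV_ge0.
have := colV_ge0 v; have := colV_le1 v => h1 h2.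
rewrite /colV in h1 h2 *; nra.
Qed.

Lemma Q4 : \big[Rplus/0]_(u : U) (pU u * \big[Rplus/0]_(u' : U) (pU u' *
  \big[Rplus/0]_(v : V) (pV v * \big[Rplus/0]_(v' : V) (pV v' * (r u v * r u' v'))))) = mu * mu.
Proof.
rewrite -Q0 rsum_distrl; apply: eq_bigr => u _.
rewrite Rmult_assoc; congr (_ * _).
rewrite rsum_distrr; apply: eq_bigr => u' _.
rewrite -Rmult_assoc (Rmult_comm _ (pU u')) Rmult_assoc; congr (_ * _).
rewrite rsum_distrl; apply: eq_bigr => v _.
rewrite Rmult_assoc; congr (_ * _).
rewrite rsum_distrr; apply: eq_bigr => v' _; ring.
Qed.


Definition K1 u v y := \big[Rplus/0]_(z : Z) W y z (f u v).
Definition K2 v u z := \big[Rplus/0]_(y : Y) W y z (f u v).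

Lemma K1_ge0 u v y : 0 <= K1 u v y. Proof. by apply: rsum_ge0 => z _. Qed.
Lemma K2_ge0 v u z : 0 <= K2 v u z. Proof. by apply: rsum_ge0 => y _. Qed.
Lemma K1_sum1 u v : \big[Rplus/0]_(y : Y) K1 u v y = 1.
Proof.
rewrite -(W_sum1 (f u v)) /K1.
by rewrite (pair_big xpredT xpredT (fun y z => W y z (f u v))).
Qed.
Lemma K2_sum1 v u : \big[Rplus/0]_(z : Z) K2 v u z = 1.
Proof.
rewrite -(W_sum1 (f u v)) /K2 exchange_big /=.
by rewrite (pair_big xpredT xpredT (fun y z => W y z (f u v))).
Qed.

Variables (M1 M2 L1 L2 : nat) (m10 : 'I_M1) (m20 : 'I_M2).

Definition D1 (cU : {ffun 'I_M1 * 'I_L1 -> U}) (y : Y) : 'I_M1 :=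
  odflt m10 [pick m | [exists j, (cU (m, j), y) \in S1]].
Definition D2 (cV : {ffun 'I_M2 * 'I_L2 -> V}) (z : Z) : 'I_M2 :=
  odflt m20 [pick m | [exists k, (cV (m, k), z) \in S2]].

Lemma D1_err cU m1 j y : D1 cU y != m1 ->
  (cU (m1, j), y) \notin S1 \/ exists i : 'I_M1 * 'I_L1, i.1 != m1 /\ (cU i, y) \in S1.
Proof.
rewrite /D1; case: pickP => [m' /existsP [j' Hj'] | Hn] /= Hne.
  by right; exists (m', j').
left; apply/negP => Hin.
have : [exists j', (cU (m1, j'), y) \in S1] by apply/existsP; exists j.
by rewrite Hn.
Qed.

Lemma D2_err cV m2 k z : D2 cV z != m2 ->
  (cV (m2, k), z) \notin S2 \/ exists i : 'I_M2 * 'I_L2, i.1 != m2 /\ (cV i, z) \in S2.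
Proof.
rewrite /D2; case: pickP => [m' /existsP [k' Hk'] | Hn] /= Hne.
  by right; exists (m', k').
left; apply/negP => Hin.
have : [exists k', (cV (m2, k'), z) \in S2] by apply/existsP; exists k.
by rewrite Hn.
Qed.

Definition eR (cU : {ffun 'I_M1 * 'I_L1 -> U}) (cV : {ffun 'I_M2 * 'I_L2 -> V})
  (m1 : 'I_M1) (m2 : 'I_M2) (jk : 'I_L1 * 'I_L2) :=
  \big[Rplus/0]_(yz : Y * Z)
    (if (D1 cU yz.1 == m1) && (D2 cV yz.2 == m2) then 0
     else W yz.1 yz.2 (f (cU (m1, jk.1)) (cV (m2, jk.2)))).

Lemma eR_ge0 cU cV m1 m2 jk : 0 <= eR cU cV m1 m2 jk.
Proof. apply: rsum_ge0 => yz _; case: ifP => _; [lra | exact: W_ge0]. Qed.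

Lemma eR_le1 cU cV m1 m2 jk : eR cU cV m1 m2 jk <= 1.
Proof.
rewrite -(W_sum1 (f (cU (m1, jk.1)) (cV (m2, jk.2)))); apply: rsum_le => yz _.
case: ifP => _; [exact: W_ge0 | lra].
Qed.

Definition sidx1 (cU : {ffun 'I_M1 * 'I_L1 -> U}) (m1 : 'I_M1) y :=
  \big[Rplus/0]_(i : 'I_M1 * 'I_L1) (if i.1 != m1 then (if (cU i, y) \in S1 then 1 else 0) else 0).
Definition sidx2 (cV : {ffun 'I_M2 * 'I_L2 -> V}) (m2 : 'I_M2) z :=
  \big[Rplus/0]_(i : 'I_M2 * 'I_L2) (if i.1 != m2 then (if (cV i, z) \in S2 then 1 else 0) else 0).

Lemma if01_ge0 (b1 b2 : bool) : 0 <= if b1 then (if b2 then 1 else 0) else 0.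
Proof. case: b1; case: b2; lra. Qed.

Lemma sidx1_ge0 cU m1 y : 0 <= sidx1 cU m1 y.
Proof. apply: rsum_ge0 => i _; exact: if01_ge0. Qed.
Lemma sidx2_ge0 cV m2 z : 0 <= sidx2 cV m2 z.
Proof. apply: rsum_ge0 => i _; exact: if01_ge0. Qed.

Lemma ind_bound cU cV m1 m2 j k y z :
  (if (D1 cU y == m1) && (D2 cV z == m2) then 0 else 1) <=
  (if (cU (m1, j), y) \in S1 then 0 else 1) + sidx1 cU m1 y +
  (if (cV (m2, k), z) \in S2 then 0 else 1) + sidx2 cV m2 z.
Proof.
have h1 := sidx1_ge0 cU m1 y; have h2 := sidx2_ge0 cV m2 z.
have t1 : 0 <= (if (cU (m1, j), y) \in S1 then 0 else 1) by case: ifP => _; lra.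
have t2 : 0 <= (if (cV (m2, k), z) \in S2 then 0 else 1) by case: ifP => _; lra.
case: ifP => H; first lra.
move/negbT: H; rewrite negb_and => /orP [H | H].
  case: (D1_err j H) => [/negbTE -> | [i [Hi1 Hi2]]]; first lra.
  have hh := @rsum_term _ (fun i' : 'I_M1 * 'I_L1 => if i'.1 != m1 then (if (cU i', y) \in S1 then 1 else 0) else 0) i.
  rewrite /= Hi1 Hi2 in hh.
  suff : 1 <= sidx1 cU m1 y by lra.
  apply: hh => i'; exact: if01_ge0.
case: (D2_err k H) => [/negbTE -> | [i [Hi1 Hi2]]]; first lra.
have hh := @rsum_term _ (fun i' : 'I_M2 * 'I_L2 => if i'.1 != m2 then (if (cV i', z) \in S2 then 1 else 0) else 0) i.
rewrite /= Hi1 Hi2 in hh.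
suff : 1 <= sidx2 cV m2 z by lra.
apply: hh => i'; exact: if01_ge0.
Qed.

Lemma sum_pair_y (F : Y -> R) x :
  \big[Rplus/0]_(yz : Y * Z) (W yz.1 yz.2 x * F yz.1) =
  \big[Rplus/0]_(y : Y) (\big[Rplus/0]_(z : Z) W y z x * F y).
Proof.
rewrite -(pair_big xpredT xpredT (fun y z => W y z x * F y)) /=.
by apply: eq_bigr => y _; rewrite rsum_distrl.
Qed.

Lemma sum_pair_z (F : Z -> R) x :
  \big[Rplus/0]_(yz : Y * Z) (W yz.1 yz.2 x * F yz.2) =
  \big[Rplus/0]_(z : Z) (\big[Rplus/0]_(y : Y) W y z x * F z).
Proof.
rewrite -(pair_big xpredT xpredT (fun y z => W y z x * F z)) /= exchange_big /=.
by apply: eq_bigr => z _; rewrite rsum_distrl.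
Qed.

Lemma sidx1_exch cU m1 (K : Y -> R) :
  \big[Rplus/0]_(y : Y) (K y * sidx1 cU m1 y) =
  \big[Rplus/0]_(i : 'I_M1 * 'I_L1) (if i.1 != m1 then
     \big[Rplus/0]_(y : Y) (K y * (if (cU i, y) \in S1 then 1 else 0)) else 0).
Proof.
rewrite /sidx1 (eq_bigr (fun y => \big[Rplus/0]_(i : 'I_M1 * 'I_L1) (K y *
  (if i.1 != m1 then (if (cU i, y) \in S1 then 1 else 0) else 0)))); last by move=> y _; rewrite rsum_distrr.
rewrite exchange_big /=; apply: eq_bigr => i _.
case: ifP => _; last by apply: big1 => y _; lra.
done.
Qed.

Lemma sidx2_exch cV m2 (K : Z -> R) :
  \big[Rplus/0]_(z : Z) (K z * sidx2 cV m2 z) =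
  \big[Rplus/0]_(i : 'I_M2 * 'I_L2) (if i.1 != m2 then
     \big[Rplus/0]_(z : Z) (K z * (if (cV i, z) \in S2 then 1 else 0)) else 0).
Proof.
rewrite /sidx2 (eq_bigr (fun z => \big[Rplus/0]_(i : 'I_M2 * 'I_L2) (K z *
  (if i.1 != m2 then (if (cV i, z) \in S2 then 1 else 0) else 0)))); last by move=> z _; rewrite rsum_distrr.
rewrite exchange_big /=; apply: eq_bigr => i _.
case: ifP => _; last by apply: big1 => z _; lra.
done.
Qed.

Lemma eR_bound cU cV m1 m2 j k :
  eR cU cV m1 m2 (j, k) <=
  \big[Rplus/0]_(y : Y) (K1 (cU (m1, j)) (cV (m2, k)) y * (if (cU (m1, j), y) \in S1 then 0 else 1))
  + \big[Rplus/0]_(i : 'I_M1 * 'I_L1) (if i.1 != m1 then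
     \big[Rplus/0]_(y : Y) (K1 (cU (m1, j)) (cV (m2, k)) y * (if (cU i, y) \in S1 then 1 else 0)) else 0)
  + \big[Rplus/0]_(z : Z) (K2 (cV (m2, k)) (cU (m1, j)) z * (if (cV (m2, k), z) \in S2 then 0 else 1))
  + \big[Rplus/0]_(i : 'I_M2 * 'I_L2) (if i.1 != m2 then
     \big[Rplus/0]_(z : Z) (K2 (cV (m2, k)) (cU (m1, j)) z * (if (cV i, z) \in S2 then 1 else 0)) else 0).
Proof.
set u := cU (m1, j); set v := cV (m2, k).
apply: (@Rle_trans _ (\big[Rplus/0]_(yz : Y * Z) (
   W yz.1 yz.2 (f u v) * (if (u, yz.1) \in S1 then 0 else 1) +
   W yz.1 yz.2 (f u v) * sidx1 cU m1 yz.1 +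
   W yz.1 yz.2 (f u v) * (if (v, yz.2) \in S2 then 0 else 1) +
   W yz.1 yz.2 (f u v) * sidx2 cV m2 yz.2))).
  apply: rsum_le => -[y z] _ /=.
  have := ind_bound cU cV m1 m2 j k y z; rewrite -/u -/v => hb.
  have hw := W_ge0 y z (f u v).
  case: ifP => H; rewrite H in hb.
    have := sidx1_ge0 cU m1 y; have := sidx2_ge0 cV m2 z.
    case: ((u, y) \in S1); case: ((v, z) \in S2) => h1 h2; nra.
  rewrite -!Rmult_plus_distr_l -{1}(Rmult_1_r (W y z (f u v))).
  exact: Rmult_le_compat_l.
rewrite !big_split /= (sum_pair_y (fun y => if (u, y) \in S1 then 0 else 1)) (sum_pair_y (sidx1 cU m1)).
rewrite (sum_pair_z (fun z => if (v, z) \in S2 then 0 else 1)) (sum_pair_z (sidx2 cV m2)).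
rewrite (sidx1_exch cU m1 (fun y => \big[Rplus/0]_(z : Z) W y z (f u v))).
rewrite (sidx2_exch cV m2 (fun z => \big[Rplus/0]_(y : Y) W y z (f u v))).
by apply: Req_le.
Qed.

Lemma EUV_if (T1 T2 A1 A2 : finType) (p1 : A1 -> R) (p2 : A2 -> R)
  (p1_sum1 : \big[Rplus/0]_(a : A1) p1 a = 1) (p2_sum1 : \big[Rplus/0]_(a : A2) p2 a = 1)
  (b : bool) (h : {ffun T1 -> A1} -> {ffun T2 -> A2} -> R) :
  EUV p1 p2 (fun c1 c2 => if b then h c1 c2 else 0) = if b then EUV p1 p2 h else 0.
Proof. case: b => //; exact: EUV_const. Qed.

Let Pswap := fun v u => pUV u v.
Lemma Pswap_sum1 : \big[Rplus/0]_(v : V) \big[Rplus/0]_(u : U) Pswap v u = 1.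
Proof. by rewrite /Pswap exchange_big. Qed.
Lemma Pswap_ge0 v u : 0 <= Pswap v u. Proof. exact: P_ge0. Qed.
Lemma r_le_swap v u : margA Pswap v * margB Pswap u * (fun v u => r u v) v u <= Pswap v u.
Proof. change (margB pUV v * margA pUV u * r u v <= pUV u v). have := r_le_P u v; lra. Qed.

Lemma massProd_ge0 (A B : finType) (P : A -> B -> R) (S : {set A * B}) :
  (forall a b, 0 <= P a b) -> 0 <= massProd P S.
Proof.
move=> H; apply: rsum_ge0 => x _; apply: Rmult_le_pos; apply: rsum_ge0 => ? _; exact: H.
Qed.

Lemma jUY_ge0 u y : 0 <= joint_UY pUV f W u y.
Proof. apply: rsum_ge0 => v _; apply: Rmult_le_pos => //; exact: K1_ge0. Qed.
Lemma jVZ_ge0 v z : 0 <= joint_VZ pUV f W v z.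
Proof. apply: rsum_ge0 => u _; apply: Rmult_le_pos => //; exact: K2_ge0. Qed.

Lemma ReR_bound m1 m2 j k :
  EUV pU pV (fun (cU : {ffun 'I_M1 * 'I_L1 -> U}) (cV : {ffun 'I_M2 * 'I_L2 -> V}) =>
     r (cU (m1, j)) (cV (m2, k)) * eR cU cV m1 m2 (j, k)) <=
  (1 - massP (joint_UY pUV f W) S1) + INR M1 * INR L1 * massProd (joint_UY pUV f W) S1
  + (1 - massP (joint_VZ pUV f W) S2) + INR M2 * INR L2 * massProd (joint_VZ pUV f W) S2.
Proof.
set a := (m1, j); set b := (m2, k).
apply: (Rle_trans _ _ _ (EUV_le pU_ge0 pV_ge0 (fun cU cV =>
   Rmult_le_compat_l _ _ _ (r_ge0 _ _) (eR_bound cU cV m1 m2 j k)))).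
rewrite (EUV_ext pU pV (h' := fun (cU : {ffun 'I_M1 * 'I_L1 -> U}) (cV : {ffun 'I_M2 * 'I_L2 -> V}) =>
   (r (cU a) (cV b) * \big[Rplus/0]_(y : Y) (K1 (cU a) (cV b) y * (if (cU a, y) \in S1 then 0 else 1))
  + \big[Rplus/0]_(i : 'I_M1 * 'I_L1) (if i.1 != m1 then
     r (cU a) (cV b) * \big[Rplus/0]_(y : Y) (K1 (cU a) (cV b) y * (if (cU i, y) \in S1 then 1 else 0)) else 0))
  + r (cU a) (cV b) * \big[Rplus/0]_(z : Z) (K2 (cV b) (cU a) z * (if (cV b, z) \in S2 then 0 else 1))
  + \big[Rplus/0]_(i : 'I_M2 * 'I_L2) (if i.1 != m2 then
     r (cU a) (cV b) * \big[Rplus/0]_(z : Z) (K2 (cV b) (cU a) z * (if (cV i, z) \in S2 then 1 else 0)) else 0))); last first.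
  move=> cU cV; rewrite -/a -/b !Rmult_plus_distr_l; congr (_ + _ + _ + _).
    by rewrite rsum_distrr; apply: eq_bigr => i _; case: (i.1 != m1); lra.
  by rewrite rsum_distrr; apply: eq_bigr => i _; case: (i.1 != m2); lra.
rewrite !EUV_add.
have cardI1 : INR M1 * INR L1 = INR #|{: 'I_M1 * 'I_L1}| by rewrite card_prod !card_ord mult_INR.
have cardI2 : INR M2 * INR L2 = INR #|{: 'I_M2 * 'I_L2}| by rewrite card_prod !card_ord mult_INR.
apply: Rplus_le_compat; [apply: Rplus_le_compat; [apply: Rplus_le_compat|]|].
- exact: (dec_a S1 P_sum1 K1_ge0 K1_sum1 r_le_P a b).
- rewrite (@EUV_sum _ _ _ _ pU pV _ (fun i (cU : {ffun 'I_M1 * 'I_L1 -> U}) (cV : {ffun 'I_M2 * 'I_L2 -> V}) =>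
     if i.1 != m1 then r (cU a) (cV b) * \big[Rplus/0]_(y : Y) (K1 (cU a) (cV b) y *
        (if (cU i, y) \in S1 then 1 else 0)) else 0)).
  rewrite cardI1 -rsum_const; apply: rsum_le => i _.
  rewrite (EUV_if pU_sum1 pV_sum1); case: ifP => H.
    have ai : a != i by apply: contraNneq H => <-.
    exact: (dec_b S1 P_ge0 P_sum1 K1_ge0 K1_sum1 r_le_P b ai).
  apply: massProd_ge0; exact: jUY_ge0.
- rewrite EUV_swap.
  exact: (dec_a S2 Pswap_sum1 K2_ge0 K2_sum1 r_le_swap b a).
- rewrite EUV_swap.
  rewrite (@EUV_sum _ _ _ _ pV pU _ (fun i (cV : {ffun 'I_M2 * 'I_L2 -> V}) (cU : {ffun 'I_M1 * 'I_L1 -> U}) =>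
     if i.1 != m2 then r (cU a) (cV b) * \big[Rplus/0]_(z : Z) (K2 (cV b) (cU a) z *
        (if (cV i, z) \in S2 then 1 else 0)) else 0)).
  rewrite cardI2 -rsum_const; apply: rsum_le => i _.
  rewrite (EUV_if pV_sum1 pU_sum1); case: ifP => H.
    have bi : b != i by apply: contraNneq H => <-.
    exact: (dec_b S2 Pswap_ge0 Pswap_sum1 K2_ge0 K2_sum1 r_le_swap a bi).
  apply: massProd_ge0; exact: jVZ_ge0.
Qed.

Hypothesis L1pos : 0 < INR L1.
Hypothesis L2pos : 0 < INR L2.
Variable dl : R.
Hypothesis dl_pos : 0 < dl.

Lemma mu_gt0 : 0 < mu. Proof. exact: mu_pos. Qed.

Let N := INR L1 * INR L2 * mu.
Lemma N_pos : 0 < N.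
Proof. rewrite /N; apply: Rmult_lt_0_compat => //; exact: Rmult_lt_0_compat. Qed.

Definition wg (cU : {ffun 'I_M1 * 'I_L1 -> U}) (cV : {ffun 'I_M2 * 'I_L2 -> V}) m1 m2
  (jk : 'I_L1 * 'I_L2) := / N * r (cU (m1, jk.1)) (cV (m2, jk.2)).
Definition Am cU cV m1 m2 := \big[Rplus/0]_(jk : 'I_L1 * 'I_L2) wg cU cV m1 m2 jk.
Definition Bm cU cV m1 m2 :=
  \big[Rplus/0]_(jk : 'I_L1 * 'I_L2) (wg cU cV m1 m2 jk * eR cU cV m1 m2 jk).

Lemma wg_ge0 cU cV m1 m2 jk : 0 <= wg cU cV m1 m2 jk.
Proof.
apply: Rmult_le_pos; last exact: r_ge0.
apply: Rlt_le; apply: Rinv_0_lt_compat; exact: N_pos.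
Qed.

Lemma per_msg cU cV m1 m2 jk0 : (forall jk, eR cU cV m1 m2 jk0 <= eR cU cV m1 m2 jk) ->
  eR cU cV m1 m2 jk0 <= Bm cU cV m1 m2 + Rabs (1 - Am cU cV m1 m2).
Proof.
move=> Hmin; set e := eR cU cV m1 m2 jk0.
have he0 : 0 <= e by exact: eR_ge0.
have he1 : e <= 1 by exact: eR_le1.
have h1 : e * Am cU cV m1 m2 <= Bm cU cV m1 m2.
  rewrite /Am /Bm rsum_distrr; apply: rsum_le => jk _.
  rewrite Rmult_comm; apply: Rmult_le_compat_l; [exact: wg_ge0 | exact: Hmin].
have h2 : e * (1 - Am cU cV m1 m2) <= Rabs (1 - Am cU cV m1 m2).
  have := Rle_abs (1 - Am cU cV m1 m2); have := Rabs_pos (1 - Am cU cV m1 m2).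
  move=> h3 h4; apply: (@Rle_trans _ (e * Rabs (1 - Am cU cV m1 m2))).
    exact: Rmult_le_compat_l.
  rewrite -{2}(Rmult_1_l (Rabs _)); exact: Rmult_le_compat_r.
have -> : e = e * Am cU cV m1 m2 + e * (1 - Am cU cV m1 m2) by ring.
lra.
Qed.

Definition Tdec :=
  (1 - massP (joint_UY pUV f W) S1) + INR M1 * INR L1 * massProd (joint_UY pUV f W) S1
  + (1 - massP (joint_VZ pUV f W) S2) + INR M2 * INR L2 * massProd (joint_VZ pUV f W) S2.

Lemma EBm m1 m2 : EUV pU pV (fun cU cV => Bm cU cV m1 m2) <= Tdec / mu.
Proof.
rewrite /Bm (@EUV_sum _ _ _ _ pU pV _ (fun jk cU cV => wg cU cV m1 m2 jk * eR cU cV m1 m2 jk)).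
apply: (@Rle_trans _ (\big[Rplus/0]_(jk : 'I_L1 * 'I_L2) (/ N * Tdec))).
  apply: rsum_le => -[j k] _.
  rewrite /wg (EUV_ext pU pV (h' := fun cU cV => / N * (r (cU (m1, j)) (cV (m2, k)) * eR cU cV m1 m2 (j, k)))); last by move=> cU cV /=; ring.
  rewrite EUV_scal; apply: Rmult_le_compat_l.
    apply: Rlt_le; apply: Rinv_0_lt_compat; exact: N_pos.
  exact: ReR_bound.
rewrite rsum_const card_prod !card_ord mult_INR /N.
apply: Req_le; have := mu_gt0; move=> hmu; field; repeat split; lra.
Qed.

Lemma EA1 m1 m2 : EUV pU pV (fun cU cV => Am cU cV m1 m2) = 1.
Proof.
rewrite /Am (@EUV_sum _ _ _ _ pU pV _ (fun jk cU cV => wg cU cV m1 m2 jk)).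
rewrite (eq_bigr (fun _ => / N * mu)).
  rewrite rsum_const card_prod !card_ord mult_INR /N; have := mu_gt0; move=> hmu; field; repeat split; lra.
move=> -[j k] _; rewrite /wg EUV_scal.
rewrite (EUV_11 pU_sum1 pV_sum1 (m1, j) (m2, k) r) Q0 //.
Qed.

Lemma pair_bnd m1 m2 (jk jk' : 'I_L1 * 'I_L2) :
  EUV pU pV (fun (cU : {ffun 'I_M1 * 'I_L1 -> U}) (cV : {ffun 'I_M2 * 'I_L2 -> V}) =>
     r (cU (m1, jk.1)) (cV (m2, jk.2)) * r (cU (m1, jk'.1)) (cV (m2, jk'.2))) <=
  (if jk == jk' then c * mu else 0) + (if jk.1 == jk'.1 then mu else 0) +
  (if jk.2 == jk'.2 then mu else 0) + mu * mu.
Proof.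
have mu0 : 0 <= mu by have := mu_gt0; lra.
have cmu : 0 <= c * mu by apply: Rmult_le_pos.
case: jk jk' => j k [j' k'] /=.
have ne1 : j != j' -> (m1, j) != (m1, j') by move=> H; rewrite xpair_eqE eqxx /=.
have ne2 : k != k' -> (m2, k) != (m2, k') by move=> H; rewrite xpair_eqE eqxx /=.
case: (eqVneq j j') => [<- | Hj]; case: (eqVneq k k') => [<- | Hk].
{ rewrite !eqxx /=.
  rewrite (EUV_11 pU_sum1 pV_sum1 (m1, j) (m2, k) (fun u v => r u v * r u v)).
  have := Q1; have := Rmult_le_pos _ _ mu0 mu0; lra. }
{ case: ((j, k) == (j, k')).
  all: rewrite (EUV_12 pU_sum1 pV_sum1 (m1, j) (fun u v v' => r u v * r u v') (ne2 Hk)).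
  all: have := Q2; have := Rmult_le_pos _ _ mu0 mu0; lra. }
{ case: ((j, k) == (j', k)).
  all: rewrite (EUV_21 pU_sum1 pV_sum1 (m2, k) (fun u u' v => r u v * r u' v) (ne1 Hj)).
  all: have := Q3; have := Rmult_le_pos _ _ mu0 mu0; lra. }
{ case: ((j, k) == (j', k')).
  all: rewrite (EUV_22 pU_sum1 pV_sum1 (fun u u' v v' => r u v * r u' v') (ne1 Hj) (ne2 Hk)).
  all: rewrite Q4; lra. }
Qed.

Lemma sum_pairs_bnd (x : R) (jk : 'I_L1 * 'I_L2) :
  \big[Rplus/0]_(jk' : 'I_L1 * 'I_L2)
   ((if jk == jk' then x else 0) + (if jk.1 == jk'.1 then mu else 0) +
    (if jk.2 == jk'.2 then mu else 0) + mu * mu)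
  = x + INR L2 * mu + INR L1 * mu + INR L1 * INR L2 * (mu * mu).
Proof.
rewrite !big_split /= rsum_ind' rsum_const card_prod !card_ord mult_INR.
congr (_ + _ + _ + _).
  rewrite -(pair_big xpredT xpredT (fun j' k' => if jk.1 == j' then mu else 0)) /=.
  rewrite (eq_bigr (fun j' => if jk.1 == j' then INR L2 * mu else 0)).
    by rewrite rsum_ind'.
  move=> j' _; case: (jk.1 == j'); first by rewrite rsum_const card_ord.
  by rewrite big1.
rewrite -(pair_big xpredT xpredT (fun j' k' => if jk.2 == k' then mu else 0)) /=.
rewrite (eq_bigr (fun _ => mu)); first by rewrite rsum_const card_ord.
by move=> j' _; rewrite rsum_ind'.
Qed.

Lemma EA2 m1 m2 : EUV pU pV (fun cU cV => Am cU cV m1 m2 * Am cU cV m1 m2) <=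
  1 + (c / (INR L1 * INR L2) + / INR L1 + / INR L2) / mu.
Proof.
have hmu := mu_gt0.
rewrite (EUV_ext pU pV (h' := fun cU cV => \big[Rplus/0]_(jk : 'I_L1 * 'I_L2)
   \big[Rplus/0]_(jk' : 'I_L1 * 'I_L2) (/ N * / N * (r (cU (m1, jk.1)) (cV (m2, jk.2)) *
     r (cU (m1, jk'.1)) (cV (m2, jk'.2)))))); last first.
  move=> cU cV; rewrite /Am rsum_distrl; apply: eq_bigr => jk _.
  rewrite rsum_distrr; apply: eq_bigr => jk' _; rewrite /wg; have E : forall a b t : R, t * a * (t * b) = t * t * (a * b) by move=> *; ring. exact: E.
rewrite (@EUV_sum _ _ _ _ pU pV _ (fun jk cU cV => \big[Rplus/0]_(jk' : 'I_L1 * 'I_L2)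
   (/ N * / N * (r (cU (m1, jk.1)) (cV (m2, jk.2)) * r (cU (m1, jk'.1)) (cV (m2, jk'.2)))))).
have hN := N_pos.
have hNN : 0 <= / N * / N by apply: Rmult_le_pos; apply: Rlt_le; apply: Rinv_0_lt_compat.
apply: (@Rle_trans _ (\big[Rplus/0]_(jk : 'I_L1 * 'I_L2) (/ N * / N *
   (c * mu + INR L2 * mu + INR L1 * mu + INR L1 * INR L2 * (mu * mu))))).
  apply: rsum_le => jk _.
  rewrite (@EUV_sum _ _ _ _ pU pV _ (fun jk' cU cV =>
   (/ N * / N * (r (cU (m1, jk.1)) (cV (m2, jk.2)) * r (cU (m1, jk'.1)) (cV (m2, jk'.2)))))).
  rewrite -(sum_pairs_bnd (c * mu) jk) rsum_distrr; apply: rsum_le => jk' _.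
  rewrite EUV_scal; apply: Rmult_le_compat_l => //; exact: pair_bnd.
rewrite rsum_const card_prod !card_ord mult_INR /N.
apply: Req_le; field; repeat split; lra.
Qed.

Lemma EAbs m1 m2 : EUV pU pV (fun cU cV => Rabs (1 - Am cU cV m1 m2)) <=
  dl / 2 + (c / (INR L1 * INR L2) + / INR L1 + / INR L2) / (mu * (2 * dl)).
Proof.
have hmu := mu_gt0.
apply: (@Rle_trans _ (EUV pU pV (fun cU cV => dl / 2 + / (2 * dl) * 1 +
   (- 2 / (2 * dl)) * Am cU cV m1 m2 + / (2 * dl) * (Am cU cV m1 m2 * Am cU cV m1 m2)))).
  apply: EUV_le; [exact: pU_ge0 | exact: pV_ge0 | move=> cU cV].
  set x := 1 - Am cU cV m1 m2.
  have -> : dl / 2 + / (2 * dl) * 1 + - 2 / (2 * dl) * Am cU cV m1 m2 +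
     / (2 * dl) * (Am cU cV m1 m2 * Am cU cV m1 m2) = (dl * dl + x * x) / (2 * dl).
    rewrite /x; field; lra.
  apply: (Rmult_le_reg_r (2 * dl)); first lra.
  rewrite /Rdiv Rmult_assoc Rinv_l; last lra.
  have := Rabs_pos x; have : x * x = Rabs x * Rabs x.
    by rewrite -Rabs_mult Rabs_right //; apply: Rle_ge; nra.
  move=> e _; rewrite e Rmult_1_r; have := Rle_0_sqr (Rabs x - dl); rewrite /Rsqr; nra.
rewrite !EUV_add !EUV_scal !(EUV_const _ _ pU_sum1 pV_sum1) (EA1 m1 m2).
have := EA2 m1 m2 => h.
have hd : 0 < / (2 * dl) by apply: Rinv_0_lt_compat; lra.
apply: (@Rle_trans _ (dl / 2 + / (2 * dl) * 1 + -2 / (2 * dl) * 1 +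
   / (2 * dl) * (1 + (c / (INR L1 * INR L2) + / INR L1 + / INR L2) / mu))).
  apply: Rplus_le_compat_l; apply: Rmult_le_compat_l; [lra | exact: h].
apply: Req_le; field; lra.
Qed.

Definition gtot cU cV := / (INR M1 * INR M2) *
  \big[Rplus/0]_(m : 'I_M1 * 'I_M2) (Bm cU cV m.1 m.2 + Rabs (1 - Am cU cV m.1 m.2)).

Definition BB := Tdec / mu + (dl / 2 + (c / (INR L1 * INR L2) + / INR L1 + / INR L2) / (mu * (2 * dl))).

Lemma Egtot : EUV pU pV gtot <= BB.
Proof.
have hM1 : 0 < INR M1 by apply: lt_0_INR; apply/ltP; apply: leq_ltn_trans (ltn_ord m10).
have hM2 : 0 < INR M2 by apply: lt_0_INR; apply/ltP; apply: leq_ltn_trans (ltn_ord m20).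
rewrite /gtot EUV_scal.
rewrite (@EUV_sum _ _ _ _ pU pV _ (fun m cU cV => Bm cU cV m.1 m.2 + Rabs (1 - Am cU cV m.1 m.2))).
apply: (@Rle_trans _ (/ (INR M1 * INR M2) * \big[Rplus/0]_(m : 'I_M1 * 'I_M2) BB)).
  apply: Rmult_le_compat_l.
    apply: Rlt_le; apply: Rinv_0_lt_compat; exact: Rmult_lt_0_compat.
  apply: rsum_le => m _; rewrite EUV_add /BB.
  apply: Rplus_le_compat; [exact: EBm | exact: EAbs].
rewrite rsum_const card_prod !card_ord mult_INR.
apply: Req_le; field; lra.
Qed.

Variables (u0 : U) (v0 : V) (j0 : 'I_L1) (k0 : 'I_L2).

Lemma code_BB : is_code W M1 M2 BB.
Proof.
have hM1 : 0 < INR M1 by apply: lt_0_INR; apply/ltP; apply: leq_ltn_trans (ltn_ord m10).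
have hM2 : 0 < INR M2 by apply: lt_0_INR; apply/ltP; apply: leq_ltn_trans (ltn_ord m20).
have [cU HcU] := E_exists pU_ge0 pU_sum1 u0 Egtot.
have [cV HcV] := E_exists pV_ge0 pV_sum1 v0 HcU.
have hmin : forall m1 m2, exists jk, forall jk', eR cU cV m1 m2 jk <= eR cU cV m1 m2 jk'.
  by move=> m1 m2; exact: (exists_min _ (j0, k0)).
pose jkf m1 m2 := proj1_sig (constructive_indefinite_description _ (hmin m1 m2)).
have Hjk : forall m1 m2 jk', eR cU cV m1 m2 (jkf m1 m2) <= eR cU cV m1 m2 jk'.
  move=> m1 m2; exact: (proj2_sig (constructive_indefinite_description _ (hmin m1 m2))).
exists (fun m1 m2 => f (cU (m1, (jkf m1 m2).1)) (cV (m2, (jkf m1 m2).2))), (D1 cU), (D2 cV).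
apply: Rle_trans HcV; rewrite /error_prob /gtot.
apply: Rmult_le_compat_l.
  apply: Rlt_le; apply: Rinv_0_lt_compat; exact: Rmult_lt_0_compat.
apply: rsum_le => m _.
exact: (per_msg (Hjk m.1 m.2)).
Qed.

End Coding.

From Stdlib Require Import Classical ZArith Lia.

Lemma exp_mono (x y : R) : x <= y -> exp x <= exp y.
Proof.
move=> h; case: (Rle_lt_or_eq_dec _ _ h) => h'.
  apply: Rlt_le; exact: exp_increasing.
by rewrite h'; apply: Rle_refl.
Qed.

Lemma floor_ex (x : R) : 0 <= x -> exists n : nat, INR n <= x /\ x < INR n + 1.
Proof.
move=> hx; have [h1 h2] := archimed x.
have hup : (0 < up x)%Z by apply: lt_IZR; lra.
exists (Z.to_nat (up x - 1)).
rewrite INR_IZR_INZ Znat.Z2Nat.id; last by lia.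
rewrite minus_IZR; lra.
Qed.

Lemma lub_approx (E : R -> Prop) m e : is_lub E m -> 0 < e -> exists x, E x /\ m - e < x.
Proof.
move=> [hub hl] he; apply: NNPP => hn.
have : is_upper_bound E (m - e).
  move=> x hx; apply: Rnot_lt_le => hlt; apply: hn; by exists x.
move/hl; lra.
Qed.

Lemma glb_approx (E : R -> Prop) m e : is_glb E m -> 0 < e -> exists x, E x /\ x < m + e.
Proof.
move=> [hlb hl] he; apply: NNPP => hn.
have : is_lower_bound E (m + e).
  move=> x hx; apply: Rnot_lt_le => hlt; apply: hn; by exists x.
move/hl; lra.
Qed.

Lemma mp_bound (m i t : R) : 0 <= m -> i - 1 < t -> t = - log2 m -> m <= exp (ln 2 * (1 - i)).
Proof.
move=> hm hit et; rewrite et in hit; have hl : 0 < ln 2 by have := ln_lt_2; lra.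
case: (Rle_lt_or_eq_dec _ _ hm) => h; last by rewrite -h; apply: Rlt_le; apply: exp_pos.
rewrite -(exp_ln m h); apply: exp_mono.
rewrite /log2 in hit.
have e : ln m = ln 2 * (ln m / ln 2) by field; lra.
rewrite e; apply: Rmult_le_compat_l; lra.
Qed.

Lemma final_arith (eps0 d eps mu T Q : R) : 0 <= eps0 -> 0 < d -> 3 / 4 < mu ->
  T <= 2 * eps0 + 2 * d -> Q <= 3 * (d * d) -> 37 * d + 8 * eps0 <= eps ->
  T / mu + (d / 2 + Q / (mu * (2 * d))) <= eps.
Proof.
move=> h0 hd hmu hT hQ he.
have hmu0 : 0 < mu by lra.
have hi : / mu < 4 / 3.
  have -> : 4 / 3 = / (3 / 4) by field.
  apply: Rinv_lt_contravar => //; lra.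
have hi0 : 0 < / mu by apply: Rinv_0_lt_compat.
have h1 : T / mu <= (2 * eps0 + 2 * d) * (4 / 3).
  apply: (@Rle_trans _ ((2 * eps0 + 2 * d) * / mu)).
    by apply: Rmult_le_compat_r; lra.
  apply: Rmult_le_compat_l; lra.
have h2 : Q / (mu * (2 * d)) <= 3 * d / 2 * (4 / 3).
  have -> : Q / (mu * (2 * d)) = (Q / (2 * d)) * / mu by field; lra.
  apply: (@Rle_trans _ (3 * d / 2 * / mu)).
    apply: Rmult_le_compat_r; first lra.
    have -> : 3 * d / 2 = 3 * (d * d) / (2 * d) by field; lra.
    apply: Rmult_le_compat_r => //; apply: Rlt_le; apply: Rinv_0_lt_compat; lra.
  apply: Rmult_le_compat_l; lra.
lra.
Qed.

Lemma is_code_mono (X Y Z : finType) (W : Y -> Z -> X -> R) M1 M2 e e' :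
  is_code W M1 M2 e -> e <= e' -> is_code W M1 M2 e'.
Proof. move=> [F [D1 [D2 h]]] he; exists F, D1, D2; lra. Qed.

Unset Implicit Arguments.

Theorem theorem4
  (X Y Z U V : finType) (W : Y -> Z -> X -> R) (pUV : U -> V -> R) (f : U -> V -> X)
  (eps0 epsinf epst eps : R) (M1 M2 : nat)
  (i0UY i0VZ iinfUV : R) :
  is_bc_channel W ->
  is_distr (fun uv : U * V => pUV uv.1 uv.2) ->
  0 <= eps0 < 1 -> 0 <= epsinf <= 1/4 -> 0 < epst < 1 -> 0 < eps ->
  37 * epst + 8 * eps0 <= eps ->
  (1 <= M1)%nat -> (1 <= M2)%nat ->
  I0 (joint_UY pUV f W) eps0 i0UY ->
  I0 (joint_VZ pUV f W) eps0 i0VZ ->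
  Iinf pUV epsinf iinfUV ->
  log2 (INR M1) <= i0UY - 5 * log2 (/ epst) - 2 ->
  log2 (INR M2) <= i0VZ - 5 * log2 (/ epst) - 2 ->
  log2 (INR M1) + log2 (INR M2) <= i0UY + i0VZ - iinfUV - 11 * log2 (/ epst) - 5 ->
  is_code W M1 M2 eps.
Proof.
move=> [W_ge0 W_sum1] [Pg Ps] [he0 he0'] [hei hei'] [hd hd'] heps hsum hM1 hM2
  HI1 HI2 HIinf hR1 hR2 hR12.
have P_ge0 : forall u v, 0 <= pUV u v by move=> u v; exact: (Pg (u, v)).
have Ps' : \big[Rplus/0]_(uv : U * V) pUV uv.1 uv.2 = 1 := Ps.
have P_sum1 : \big[Rplus/0]_(u : U) \big[Rplus/0]_(v : V) pUV u v = 1.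
  by rewrite (pair_big xpredT xpredT (fun u v => pUV u v)) /=.
have [uv0 _] : exists uv : U * V, True.
  case: (pickP (fun _ : U * V => true)) => [x _|H]; first by exists x.
  have : \big[Rplus/0]_(uv : U * V) pUV uv.1 uv.2 = 0.
    by apply: big1 => x _; have := H x.
  lra.
have hM1' : leq 1 M1 := hM1.
have hM2' : leq 1 M2 := hM2.
pose m10 : 'I_M1 := Ordinal hM1'.
pose m20 : 'I_M2 := Ordinal hM2'.
have hM1r : 0 < INR M1 by apply: lt_0_INR; exact/ltP.
have hM2r : 0 < INR M2 by apply: lt_0_INR; exact/ltP.
set l := ln 2.
have hl : 0 < l by have := ln_lt_2; rewrite -/l; lra.
set la := ln (/ epst).
have hla : 0 < la.
  rewrite /la ln_Rinv //; have := ln_increasing _ _ hd hd'; rewrite ln_1; lra.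
have edl : exp (- la) = epst by rewrite /la ln_Rinv // Ropp_involutive exp_ln.
have elog : forall x, ln x = l * log2 x by move=> x; rewrite /log2 -/l; field; lra.
have hR1' : ln (INR M1) <= l * i0UY - 5 * la - 2 * l.
  rewrite (elog (INR M1)) /la (elog (/ epst)).
  have := Rmult_le_compat_l l _ _ (Rlt_le _ _ hl) hR1; lra.
have hR2' : ln (INR M2) <= l * i0VZ - 5 * la - 2 * l.
  rewrite (elog (INR M2)) /la (elog (/ epst)).
  have := Rmult_le_compat_l l _ _ (Rlt_le _ _ hl) hR2; lra.
have hR12' : ln (INR M1) + ln (INR M2) <= l * (i0UY + i0VZ - iinfUV) - 11 * la - 5 * l.
  rewrite (elog (INR M1)) (elog (INR M2)) /la (elog (/ epst)).
  have := Rmult_le_compat_l l _ _ (Rlt_le _ _ hl) hR12; lra.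
have jUY0 : forall u y, 0 <= joint_UY pUV f W u y.
  move=> u y; apply: rsum_ge0 => v _; apply: Rmult_le_pos => //; by apply: rsum_ge0.
have jVZ0 : forall v z, 0 <= joint_VZ pUV f W v z.
  move=> v z; apply: rsum_ge0 => u _; apply: Rmult_le_pos => //; by apply: rsum_ge0.
have [t1 [[S1 [hS1 eq1]] ht1]] := lub_approx HI1 Rlt_0_1.
have mp1 := mp_bound (massProd_ge0 S1 jUY0) ht1 eq1; rewrite -/l in mp1.
have [t2 [[S2 [hS2 eq2]] ht2]] := lub_approx HI2 Rlt_0_1.
have mp2 := mp_bound (massProd_ge0 S2 jVZ0) ht2 eq2; rewrite -/l in mp2.
have [t3 [[G [hG hIm]] ht3]] := glb_approx HIinf Rlt_0_1.
set c := exp (l * (iinfUV + 1)).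
have hc : 0 <= c by apply: Rlt_le; exact: exp_pos.
have G_bound : forall u v, (u, v) \in G -> 0 < pUV u v ->
    pUV u v <= c * (margA pUV u * margB pUV v).
  move=> u v huv hp.
  have hA : pUV u v <= margA pUV u by exact: (rsum_term (F := fun v => pUV u v)).
  have hB : pUV u v <= margB pUV v by exact: (rsum_term (F := fun u => pUV u v)).
  have hAB : 0 < margA pUV u * margB pUV v by apply: Rmult_lt_0_compat; lra.
  set q := pUV u v / (margA pUV u * margB pUV v).
  have hq : 0 < q by apply: Rdiv_lt_0_compat.
  have hlq : log2 q <= t3 by apply: hIm.1; exists (u, v).
  have : q <= c.
    rewrite -(exp_ln q hq); apply: exp_mono; rewrite (elog q).
    have := Rmult_le_compat_l l _ _ (Rlt_le _ _ hl) hlq; nra.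
  rewrite /q => hqc.
  have -> : pUV u v = pUV u v / (margA pUV u * margB pUV v) * (margA pUV u * margB pUV v) by field; lra.
  by apply: Rmult_le_compat_r; lra.
have hmu : 3 / 4 < massP pUV G by lra.
set e1 := l * i0UY - la - l - ln (INR M1).
set e2 := l * i0VZ - la - l - ln (INR M2).
have he1 : 4 * la + l <= e1 by rewrite /e1; lra.
have he2 : 4 * la + l <= e2 by rewrite /e2; lra.
have [L1 [hL1a hL1b]] := floor_ex (Rlt_le _ _ (exp_pos e1)).
have [L2 [hL2a hL2b]] := floor_ex (Rlt_le _ _ (exp_pos e2)).
have e2l : exp l = 2 by rewrite /l exp_ln; lra.
have hx1 : exp (e1 - l) <= INR L1.
  have h2 : 2 <= exp e1 by rewrite -e2l; apply: exp_mono; lra.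
  rewrite /Rminus exp_plus exp_Ropp e2l; lra.
have hx2 : exp (e2 - l) <= INR L2.
  have h2 : 2 <= exp e2 by rewrite -e2l; apply: exp_mono; lra.
  rewrite /Rminus exp_plus exp_Ropp e2l; lra.
have hL1p : 0 < INR L1 by apply: Rlt_le_trans hx1; exact: exp_pos.
have hL2p : 0 < INR L2 by apply: Rlt_le_trans hx2; exact: exp_pos.
have hL1n : leq 1 L1 by apply/leP; apply: INR_lt; rewrite /=; lra.
have hL2n : leq 1 L2 by apply/leP; apply: INR_lt; rewrite /=; lra.
have := code_BB f W_ge0 W_sum1 P_ge0 P_sum1 S1 S2 hc G_bound (Rlt_trans _ _ _ (ltac:(lra) : 0 < 3/4) hmu)
  m10 m20 hL1p hL2p hd uv0.1 uv0.2 (Ordinal hL1n) (Ordinal hL2n).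
move/is_code_mono; apply.
rewrite /BB /Tdec.
apply: (@final_arith eps0 epst eps (massP pUV G)); [lra | lra | lra | | | lra].
{
  have hB1 : INR M1 * INR L1 * massProd (joint_UY pUV f W) S1 <= epst.
    apply: (@Rle_trans _ (exp (ln (INR M1)) * exp e1 * exp (l * (1 - i0UY)))).
      rewrite exp_ln //; apply: Rmult_le_compat; try lra.
      - by apply: Rmult_le_pos; lra.
      - exact: massProd_ge0.
      - apply: Rmult_le_compat_l; lra.
    rewrite -!exp_plus -edl; apply: exp_mono; rewrite /e1; lra.
  have hB2 : INR M2 * INR L2 * massProd (joint_VZ pUV f W) S2 <= epst.
    apply: (@Rle_trans _ (exp (ln (INR M2)) * exp e2 * exp (l * (1 - i0VZ)))).
      rewrite exp_ln //; apply: Rmult_le_compat; try lra.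
      - by apply: Rmult_le_pos; lra.
      - exact: massProd_ge0.
      - apply: Rmult_le_compat_l; lra.
    rewrite -!exp_plus -edl; apply: exp_mono; rewrite /e2; lra.
  lra. }
  have edd : epst * epst = exp (- 2 * la) by rewrite -edl -exp_plus; congr exp; ring.
  have hi1 : / INR L1 <= epst * epst.
    rewrite edd; apply: (@Rle_trans _ (/ exp (e1 - l))).
      apply: Rinv_le_contravar => //; exact: exp_pos.
    rewrite -exp_Ropp; apply: exp_mono; lra.
  have hi2 : / INR L2 <= epst * epst.
    rewrite edd; apply: (@Rle_trans _ (/ exp (e2 - l))).
      apply: Rinv_le_contravar => //; exact: exp_pos.
    rewrite -exp_Ropp; apply: exp_mono; lra.
  have hi3 : c / (INR L1 * INR L2) <= epst * epst.
    have hp : exp (e1 - l + (e2 - l)) <= INR L1 * INR L2.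
      rewrite exp_plus; apply: Rmult_le_compat => //; apply: Rlt_le; exact: exp_pos.
    rewrite edd /Rdiv; apply: (@Rle_trans _ (c * / exp (e1 - l + (e2 - l)))).
      apply: Rmult_le_compat_l => //; apply: Rinv_le_contravar => //; exact: exp_pos.
    rewrite -exp_Ropp /c -exp_plus; apply: exp_mono; rewrite /e1 /e2; lra.
  lra.
Qed.
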